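(* $\chi_{alg}(K_j)=j$ for $j=2,3,4$.
   Context: Graphs are finite, loopless, with symmetric edge sets; $K_c$ is the complete graph on $c$ vertices. For finite sets with $|I|=n$, $|O|=m$ ($O=\{0,\dots,m-1\}$), let $\mathbb F(n,m)$ be the free product of $n$ copies of the cyclic group of order $m$ with generators $u_v$, $\mathbb C[\mathbb F(n,m)]$ its group $*$-algebra, $\omega=e^{2\pi i/m}$ and $e_{v,a}=\frac1m\sum_{k=0}^{m-1}(\omega^{-a}u_v)^k$. For graphs $G,H$, the graph homomorphism game has $I=V(G)$, $O=V(H)$, $\lambda(v,w,a,b)=0$ iff ($v=w$ and $a\ne b$) or ($(v,w)\in E(G)$ and $(a,b)\notin E(H)$). $\mathcal I(G,H)$ is the two-sided $*$-ideal generated by $\{e_{v,a}e_{w,b}:\lambda(v,w,a,b)=0\}$, $\mathcal A(G,H)=\mathbb C[\mathbb F(n,m)]/\mathcal I(G,H)$, and $\chi_{alg}(G)=\min\{c:\mathcal A(G,K_c)\neq0\}$. *)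

(* Defs.v *)
From mathcomp Require Import all_boot all_algebra.
From mathcomp Require Import complex.
From mathcomp Require Import Rstruct.
From Stdlib Require Import Reals.
Import GRing.Theory Num.Theory.

Set Implicit Arguments.
Unset Strict Implicit.
Unset Printing Implicit Defensive.

Definition Cx : Type := (Rdefinitions.R)[i].

Definition omega (m : nat) : Cx :=
  @Complex Rdefinitions.R (Rtrigo_def.cos (2 * Rtrigo1.PI / INR m))%R
          (Rtrigo_def.sin (2 * Rtrigo1.PI / INR m))%R.

(* Words in the generators: a letter (v, k) stands for u_v ^ k.
   Group elements of F(n,m) are represented by reduced words
   (no letter with exponent = 0 mod m, exponents in 1..m-1,
   no two consecutive letters with the same generator). *)
Definition letter (n : nat) := ('I_n * nat)%type.

(* multiply the letter x onto the left of a reduced word s, and reduce *)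
Definition push (n m : nat) (x : letter n) (s : seq (letter n)) : seq (letter n) :=
  if (x.2 %% m == 0)%N then s else
  match s with
  | y :: s' =>
      if x.1 == y.1 then
        (let k := ((x.2 + y.2) %% m)%N in if k == 0%N then s' else (x.1, k) :: s')
      else (x.1, (x.2 %% m)%N) :: s
  | [::] => [:: (x.1, (x.2 %% m)%N)]
  end.

Definition reduce (n m : nat) (w : seq (letter n)) : seq (letter n) :=
  foldr (@push n m) [::] w.

(* inverse of a word: (u_{v1}^{k1} ... u_{vr}^{kr})^{-1} = u_{vr}^{m-kr} ... u_{v1}^{m-k1} *)
Definition winv (n m : nat) (w : seq (letter n)) : seq (letter n) :=
  rev [seq (x.1, (m - x.2 %% m)%N) | x <- w].

Local Open Scope ring_scope.

(* An element is a finite formal linear combination sum_t c_t g_t of words;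
   two combinations denote the same element of C[F(n,m)] iff all their
   coefficients (on reduced words = group elements) agree. *)
Definition gelt (n : nat) := seq (Cx * seq (letter n)).

Definition coef (n m : nat) (p : gelt n) (w : seq (letter n)) : Cx :=
  \sum_(t <- p | reduce m t.2 == w) t.1.

Definition gmul (n : nat) (p q : gelt n) : gelt n :=
  [seq (t.1 * s.1, t.2 ++ s.2) | t <- p, s <- q].

Definition gstar (n m : nat) (p : gelt n) : gelt n :=
  [seq ((t.1)^*, winv m t.2) | t <- p].

Definition gone (n : nat) : gelt n := [:: (1, [::])].

Definition proj_e (n m : nat) (v : 'I_n) (a : 'I_m) : gelt n :=
  [seq ((m%:R)^-1 * ((omega m)^-1 ^+ a) ^+ k, nseq k (v, 1%N)) | k <- iota 0 m].

Definition lambda_zero (n m : nat) (eG : rel 'I_n) (eH : rel 'I_m)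
    (v w : 'I_n) (a b : 'I_m) : bool :=
  ((v == w) && (a != b)) || (eG v w && ~~ eH a b).

(* generator of the *-ideal indexed by (v,w,a,b,star-flag):
   e_{v,a} e_{w,b} or its adjoint *)
Definition igen (n m : nat) (s : 'I_n * 'I_n * 'I_m * 'I_m * bool) : gelt n :=
  let: (v, w, a, b, st) := s in
  let p := gmul (proj_e v a) (proj_e w b) in
  if st then gstar m p else p.

(* p lies in the two-sided *-ideal I(G,H) generated by
   { e_{v,a} e_{w,b} : lambda(v,w,a,b) = 0 }, i.e. p is a finite sum of terms
   x * g * y with g a generator or the adjoint of a generator. *)
Definition in_ideal (n m : nat) (eG : rel 'I_n) (eH : rel 'I_m) (p : gelt n) : Prop :=
  exists l : seq (gelt n * ('I_n * 'I_n * 'I_m * 'I_m * bool) * gelt n),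
    all (fun t => let: (_, (v, w, a, b, _), _) := t in lambda_zero eG eH v w a b) l
    /\ forall u : seq (letter n),
         coef m p u =
         coef m (flatten [seq (let: (x, s, y) := t in gmul (gmul x (@igen n m s)) y) | t <- l]) u.

(* A(G,H) = C[F(n,m)] / I(G,H) is nonzero iff I(G,H) is not everything *)
Definition alg_nonzero (n m : nat) (eG : rel 'I_n) (eH : rel 'I_m) : Prop :=
  exists p : gelt n, ~ in_ideal eG eH p.

Local Close Scope ring_scope.

Definition Kgraph (c : nat) : rel 'I_c := fun x y => x != y.

Definition chi_alg_is (n : nat) (eG : rel 'I_n) (c : nat) : Prop :=
  0 < c /\ alg_nonzero eG (@Kgraph c) /\
  forall c', 0 < c' < c -> ~ alg_nonzero eG (@Kgraph c').

(* Main.v *)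
Require Import Defs.
From mathcomp Require Import all_boot all_algebra.
From mathcomp Require Import complex Rstruct.
From mathcomp Require Import ring lra.
From Stdlib Require Ncring Ncring_tac Algebra_syntax Ncring_initial ZArith.
From Stdlib Require Import Setoid Morphisms.
From Stdlib Require Reals.
Import GRing.Theory Num.Theory.
Set Implicit Arguments.
Unset Strict Implicit.

Section Push.
Variables (n m : nat).
Hypothesis hm : (0 < m)%N.

Fixpoint red (w : seq (letter n)) : bool :=
  match w with
  | [::] => true
  | y :: w' => [&& (0 < y.2 < m)%N, (if w' is z :: _ then z.1 != y.1 else true) & red w']
  end.

Lemma push_mod (i : 'I_n) k w : push m (i, k %% m) w = push m (i, k) w.
Proof. by rewrite /push /= modn_mod; case: w => [|y w] //=; rewrite modnDml. Qed.

Lemma push_red x w : red w -> red (push m x w).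
Proof.
case: x => i k; rewrite /push /=.
case: ifP => // hk.
case: w => [|[j l] w] /=.
  by rewrite ltn_pmod // lt0n hk.
case/and3P => hl hw rw.
case: ifP => [/eqP eij|nij].
  case: ifP => [_|hk2]; first exact: rw.
  rewrite /= ltn_pmod // lt0n hk2 /=. rewrite -eij in hw. by rewrite hw rw.
by rewrite /= ltn_pmod // lt0n hk /= eq_sym nij hl hw rw.
Qed.

Lemma push_push (i : 'I_n) k l w : red w ->
  push m (i, k) (push m (i, l) w) = push m (i, k + l) w.
Proof.
move=> rw.
case hl: (l %% m == 0)%N.
  have -> : push m (i, l) w = w by rewrite /push /= hl.
  by rewrite -(push_mod i (k+l)) -modnDmr (eqP hl) addn0 push_mod.
case: w rw => [|[j y] w] /= rw.
  rewrite /push /= hl /= eqxx modnDmr.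
  case: ifP => hk; last by case: ifP.
  by rewrite -modnDml (eqP hk) add0n hl.
case/and3P: rw => /andP[y0 ym] hw rw.
rewrite [push m (i, l) _]/push /= hl /=.
have [eij|nij] := eqVneq i j; last first.
  rewrite /push /= eqxx modnDmr (negbTE nij).
  case: ifP => hk.
    by rewrite -modnDml (eqP hk) add0n hl.
  by [].
subst j.
case: ifP => [/eqP h1|h1].
- rewrite /push /= eqxx.
  case: ifP => hk.
    by rewrite -modnDml (eqP hk) add0n hl -addnA -modnDml (eqP hk) add0n h1.
  case: ifP => hkl.
    have ky : (k %% m = y)%N.
      by rewrite -(modn_small ym) -[in LHS](addn0 k) -h1 modnDmr addnA -modnDml (eqP hkl) add0n.
    case: w hw rw => [|z w] /= hw _. by move: ky =>/= ->. by rewrite eq_sym (negbTE hw); move: ky => /= ->.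
  rewrite -addnA -modnDmr h1 addn0 hk. by case: w hw rw => [|z w] /= hw _; rewrite // eq_sym (negbTE hw).
- rewrite /push /= eqxx modnDmr addnA.
  case: ifP => hk.
    by rewrite -(modnDml k l) (eqP hk) add0n hl -addnA -(modnDml k) (eqP hk) add0n h1.
  case hkl: ((k + l) %% m == 0) => //.
  by rewrite -(modnDml (k + l) y) (eqP hkl) add0n modn_small // eqn0Ngt y0.
Qed.


Lemma foldr_red r a : red r -> red (foldr (push m) r a).
Proof. by move=> rr; elim: a => //= x a IH; apply: push_red. Qed.

Lemma reduce_red t : red (reduce m t).
Proof. exact: foldr_red. Qed.

Lemma push_act r x a : red r ->
  foldr (push m) r (push m x a) = push m x (foldr (push m) r a).
Proof.
move=> rr; case: x => i k.
case hk: (k %% m == 0)%N.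
  have e : forall w, push m (i, k) w = w by move=> w; rewrite /push /= hk.
  by rewrite !e.
case: a => [|[j l] a].
  have -> : push m (i, k) [::] = [:: (i, k %% m)] by rewrite /push /= hk.
  by rewrite /= push_mod.
case: (eqVneq i j) => [eij|nij].
  subst j.
  have -> : push m (i, k) ((i, l) :: a) =
     if ((k + l) %% m == 0)%N then a else (i, (k + l) %% m) :: a by rewrite /push /= hk eqxx.
  rewrite /= push_push ?foldr_red //.
  case: ifP => h0 /=.
    by rewrite -push_mod (eqP h0) /push /= mod0n eqxx.
  by rewrite push_mod.
have -> : push m (i, k) ((j, l) :: a) = (i, k %% m) :: (j, l) :: a by rewrite /push /= hk (negbTE nij).
by rewrite /= push_mod.
Qed.

Lemma foldr_reduce r t : red r -> foldr (push m) r (reduce m t) = foldr (push m) r t.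
Proof.
move=> rr; elim: t => //= x t IH.
by rewrite push_act // IH.
Qed.

Lemma reduce_cat (t s : seq (letter n)) : reduce m (t ++ s) = reduce m (reduce m t ++ s).
Proof.
by rewrite /reduce !foldr_cat foldr_reduce // reduce_red.
Qed.
End Push.

Section Coef.
Variables (n m : nat).
Hypothesis hm : (0 < m)%N.
Local Open Scope ring_scope.
Notation T := (gelt n).
Implicit Types p q z : T.

Definition ceq p q := forall u, coef m p u = coef m q u.
Definition gneg p : T := [seq (- t.1, t.2) | t <- p].
Definition gsc (c : Cx) p : T := [seq (c * t.1, t.2) | t <- p].

Lemma coefE p u : coef m p u = \sum_(t <- p) (if reduce m t.2 == u then t.1 else 0).
Proof. by rewrite /coef big_mkcond. Qed.

Lemma coef_cat p q u : coef m (p ++ q) u = coef m p u + coef m q u.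
Proof. by rewrite /coef big_cat. Qed.

Lemma coef_nil u : coef m ([::] : T) u = 0.
Proof. by rewrite /coef big_nil. Qed.

Lemma coef_neg p u : coef m (gneg p) u = - coef m p u.
Proof.
rewrite !coefE big_map -sumrN; apply: eq_bigr => t _ /=.
by case: ifP; rewrite ?oppr0.
Qed.

Lemma coef_sc c p u : coef m (gsc c p) u = c * coef m p u.
Proof.
rewrite !coefE big_map mulr_sumr; apply: eq_bigr => t _ /=.
by case: ifP; rewrite ?mulr0.
Qed.

Lemma coef_gmul p q u : coef m (gmul p q) u =
  \sum_(t <- p) \sum_(s <- q) (if reduce m (t.2 ++ s.2) == u then t.1 * s.1 else 0).
Proof. by rewrite coefE /gmul big_allpairs_dep. Qed.

Lemma coef_flatten (I : Type) (s : seq I) (f : I -> T) u :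
  coef m (flatten (map f s)) u = \sum_(i <- s) coef m (f i) u.
Proof.
elim: s => [|i s IH] /=; first by rewrite big_nil coef_nil.
by rewrite big_cons coef_cat IH.
Qed.

Lemma sum_red_U p (g : seq (letter n) -> Cx) (U : seq (seq (letter n))) :
  uniq U -> {in p, forall t, reduce m t.2 \in U} ->
  \sum_(t <- p) t.1 * g (reduce m t.2) = \sum_(w <- U) coef m p w * g w.
Proof.
move=> uU sub.
under [RHS]eq_bigr => w _ do rewrite coefE mulr_suml.
rewrite exchange_big /= big_seq [RHS]big_seq.
apply: eq_bigr => t tp.
rewrite (bigD1_seq (reduce m t.2)) ?sub //= eqxx big1 ?addr0 // => w.
by rewrite eq_sym => /negbTE ->; rewrite mul0r.
Qed.

Lemma sum_red p q (g : seq (letter n) -> Cx) : ceq p q ->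
  \sum_(t <- p) t.1 * g (reduce m t.2) = \sum_(t <- q) t.1 * g (reduce m t.2).
Proof.
move=> e.
pose U := undup [seq reduce m t.2 | t <- p ++ q].
have uU : uniq U by apply: undup_uniq.
rewrite (@sum_red_U p g U uU); last first.
  by move=> t tp; rewrite mem_undup; apply/mapP; exists t => //; rewrite mem_cat tp.
rewrite (@sum_red_U q g U uU); last first.
  by move=> t tp; rewrite mem_undup; apply/mapP; exists t => //; rewrite mem_cat tp orbT.
by apply: eq_bigr => w _; rewrite e.
Qed.

Lemma ceq_gmull z p q : ceq p q -> ceq (gmul z p) (gmul z q).
Proof.
move=> e u; rewrite !coef_gmul; apply: eq_bigr => t _.
pose g := fun w : seq (letter n) => if foldr (push m) w t.2 == u then t.1 else 0.
have E r : \sum_(s <- r) (if reduce m (t.2 ++ s.2) == u then t.1 * s.1 else 0)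
       = \sum_(s <- r) s.1 * g (reduce m s.2).
  apply: eq_bigr => s _; rewrite /g /reduce foldr_cat.
  by case: ifP; rewrite ?mulr0 // mulrC.
by rewrite !E; apply: sum_red.
Qed.

Lemma ceq_gmulr z p q : ceq p q -> ceq (gmul p z) (gmul q z).
Proof.
move=> e u; rewrite !coef_gmul.
pose g := fun w : seq (letter n) =>
  \sum_(s <- z) (if reduce m (w ++ s.2) == u then s.1 else 0).
have E r : \sum_(t <- r) \sum_(s <- z) (if reduce m (t.2 ++ s.2) == u then t.1 * s.1 else 0)
       = \sum_(t <- r) t.1 * g (reduce m t.2).
  apply: eq_bigr => t _; rewrite /g mulr_sumr; apply: eq_bigr => s _.
  by rewrite (reduce_cat hm); case: ifP; rewrite ?mulr0.
by rewrite !E; apply: sum_red.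
Qed.

End Coef.

Section Ideal.
Variables (n m : nat).
Hypothesis hm : (0 < m)%N.
Variables (eG : rel 'I_n) (eH : rel 'I_m).
Local Open Scope ring_scope.
Notation T := (gelt n).
Implicit Types p q z : T.
Notation ceq := (@ceq n m).

Lemma ceq_refl p : ceq p p. Proof. by []. Qed.
Lemma ceq_sym p q : ceq p q -> ceq q p. Proof. by move=> e u; rewrite e. Qed.
Lemma ceq_trans p q r : ceq p q -> ceq q r -> ceq p r.
Proof. by move=> e1 e2 u; rewrite e1 e2. Qed.

Lemma gmulA a b c : ceq (gmul a (gmul b c)) (gmul (gmul a b) c).
Proof.
move=> u; rewrite !coefE /gmul !big_allpairs_dep.
under eq_bigr => t _ do rewrite big_allpairs_dep.
rewrite /=; apply: eq_bigr => t _; apply: eq_bigr => x _; apply: eq_bigr => y _.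
by rewrite catA mulrA.
Qed.

Lemma gmul_catl a b c : ceq (gmul (a ++ b) c) (gmul a c ++ gmul b c).
Proof. by move=> u; rewrite coef_cat !coef_gmul big_cat. Qed.

Lemma gmul_catr a b c : ceq (gmul a (b ++ c)) (gmul a b ++ gmul a c).
Proof.
move=> u; rewrite coef_cat !coef_gmul -big_split /=.
by apply: eq_bigr => t _; rewrite big_cat.
Qed.

Lemma gmul1l a : ceq (gmul (gone n) a) a.
Proof.
move=> u; rewrite coef_gmul big_cons big_nil addr0 coefE.
by apply: eq_bigr => s _; rewrite mul1r.
Qed.

Lemma gmul1r a : ceq (gmul a (gone n)) a.
Proof.
move=> u; rewrite coef_gmul coefE.
by apply: eq_bigr => t _; rewrite big_cons big_nil addr0 cats0 mulr1.
Qed.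

Definition tm (t : T * ('I_n * 'I_n * 'I_m * 'I_m * bool) * T) : T :=
  let: (x, s, y) := t in gmul (gmul x (@igen n m s)) y.

Definition okl (l : seq (T * ('I_n * 'I_n * 'I_m * 'I_m * bool) * T)) :=
  all (fun t => let: (_, (v, w, a, b, _), _) := t in lambda_zero eG eH v w a b) l.

Lemma in_idealP p : in_ideal eG eH p <-> exists l, okl l /\ ceq p (flatten (map tm l)).
Proof. by []. Qed.

Lemma I_ceq p q : ceq p q -> in_ideal eG eH q -> in_ideal eG eH p.
Proof.
move=> e /in_idealP [l [ok e2]]; apply/in_idealP; exists l; split => //.
exact: ceq_trans e e2.
Qed.

Lemma I_nil : in_ideal eG eH [::].
Proof. by apply/in_idealP; exists [::]; split. Qed.

Lemma I_cat p q : in_ideal eG eH p -> in_ideal eG eH q -> in_ideal eG eH (p ++ q).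
Proof.
move=> /in_idealP [l1 [o1 e1]] /in_idealP [l2 [o2 e2]].
apply/in_idealP; exists (l1 ++ l2); split; first by rewrite /okl all_cat; apply/andP; split.
by move=> u; rewrite map_cat flatten_cat !coef_cat e1 e2.
Qed.

Lemma I_lmul z p : in_ideal eG eH p -> in_ideal eG eH (gmul z p).
Proof.
move=> /in_idealP [l [o e]].
apply/in_idealP; exists [seq (let: (x, s, y) := t in (gmul z x, s, y)) | t <- l]; split.
  by move: o; rewrite /okl all_map; apply: sub_all => -[[x s] y].
apply: ceq_trans (ceq_gmull z e) _.
elim: l {o e} => [|t l IH] /=.
  by move=> u; rewrite coef_gmul coef_nil; apply: big1 => t _; rewrite big_nil.
apply: ceq_trans (gmul_catr _ _ _) _.
move=> u; rewrite !coef_cat IH; congr (_ + _).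
case: t => [[x s] y] /=.
rewrite gmulA; exact: (ceq_gmulr hm y (gmulA z x (igen s))).
Qed.

Lemma I_rmul z p : in_ideal eG eH p -> in_ideal eG eH (gmul p z).
Proof.
move=> /in_idealP [l [o e]].
apply/in_idealP; exists [seq (let: (x, s, y) := t in (x, s, gmul y z)) | t <- l]; split.
  by move: o; rewrite /okl all_map; apply: sub_all => -[[x s] y].
apply: ceq_trans (ceq_gmulr hm z e) _.
elim: l {o e} => [|t l IH] /=.
  by [].
apply: ceq_trans (gmul_catl _ _ _) _.
move=> u; rewrite !coef_cat IH; congr (_ + _).
case: t => [[x s] y] /=.
by rewrite -gmulA.
Qed.

Lemma I_sc c p : in_ideal eG eH p -> in_ideal eG eH (gsc c p).
Proof.
move=> h; have -> : gsc c p = gmul [:: (c, [::])] p by rewrite /gmul /= cats0.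
exact: I_lmul.
Qed.

Lemma I_neg p : in_ideal eG eH p -> in_ideal eG eH (gneg p).
Proof.
move=> h; apply: (I_ceq _ (I_sc (-1) h)) => u.
by rewrite coef_neg coef_sc mulN1r.
Qed.

Lemma I_gen v w a b : lambda_zero eG eH v w a b ->
  in_ideal eG eH (gmul (proj_e v a) (proj_e w b)).
Proof.
move=> lz; apply/in_idealP; exists [:: (gone n, (v, w, a, b, false), gone n)]; split.
  by rewrite /okl /= lz.
move=> u /=; rewrite cats0 gmul1r; symmetry; apply: gmul1l.
Qed.

End Ideal.

Module Om.
Import Stdlib.Reals.Reals.

Local Open Scope ring_scope.

Lemma omega1 : omega 1 = 1.
Proof.
rewrite /omega.
have -> : (2 * PI / INR 1)%R = (2 * PI)%R by rewrite /=; field.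
by rewrite cos_2PI sin_2PI.
Qed.

Lemma omega2 : omega 2 = -1.
Proof.
rewrite /omega.
have -> : (2 * PI / INR 2)%R = PI by rewrite /=; field.
rewrite cos_PI sin_PI; apply/eqP; rewrite eq_complex /=; apply/andP; split; apply/eqP; last by rewrite oppr0.
by [].
Qed.

Lemma omega4 : omega 4 = 'i%C.
Proof.
rewrite /omega.
have -> : (2 * PI / INR 4)%R = (PI / 2)%R by rewrite /=; field.
by rewrite cos_PI2 sin_PI2.
Qed.

Definition w3 : Cx := Complex (- 2^-1) (Num.sqrt 3 / 2).

Lemma omega3 : omega 3 = w3.
Proof.
rewrite /omega.
have -> : (2 * PI / INR 3)%R = (2 * (PI / 3))%R by rewrite /=; field.
have h2 : (2%:R : Rdefinitions.R) = 2%R by rewrite -INRE /=.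
rewrite cos_2PI3 sin_2PI3 /w3 RsqrtE; congr Complex.
  rewrite h2 -RoppE -RinvE; field.
Qed.

Lemma w3sq : w3 * w3 = - w3 - 1.
Proof.
have hs : Num.sqrt 3 * Num.sqrt 3 = 3 :> Rdefinitions.R.
  by rewrite -expr2 sqr_sqrtr // ler0n.
apply/eqP; rewrite eq_complex /=; apply/andP; split; apply/eqP.

  nra.
nra.
Qed.

Lemma w3_neq1 : w3 != 1.
Proof.
apply/negP => /eqP h; have := congr1 (fun z : Cx => let: Complex a _ := z in a) h; rewrite /= => h'.
have : (0 : Rdefinitions.R) < 2^-1 by rewrite invr_gt0 ltr0n.
lra.
Qed.

Lemma w3_cube : w3 ^+ 3 = 1.
Proof.
rewrite exprS expr2 w3sq; apply/eqP; rewrite eq_complex /=.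
have hs : Num.sqrt 3 * Num.sqrt 3 = 3 :> Rdefinitions.R.
  by rewrite -expr2 sqr_sqrtr // ler0n.
apply/andP; split; apply/eqP; nra.
Qed.

Lemma w3sq_neq1 : w3 ^+ 2 != 1.
Proof.
rewrite expr2 w3sq; apply/negP => /eqP h; have := congr1 (fun z : Cx => let: Complex a _ := z in a) h; rewrite /= => h'.
have : (0 : Rdefinitions.R) < 2^-1 by rewrite invr_gt0 ltr0n.
lra.
Qed.

Definition reC (z : Cx) : Rdefinitions.R := let: Complex a _ := z in a.
Definition imC (z : Cx) : Rdefinitions.R := let: Complex _ b := z in b.

Lemma prim_omega (m : nat) : (1 <= m <= 4)%nat -> primitive_root_of_unity m (omega m).
Proof.
case: m => [|[|[|[|[|m]]]]] // _; apply/andP; split => //; apply/forallP => -[i hi];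
  rewrite unity_rootE.
- by case: i hi => [|i] //= _; rewrite omega1 expr1 !eqxx.
- rewrite omega2; case: i hi => [|[|i]] //= _.
    rewrite expr1 [X in _ == X]/= eqbF_neg; apply/negP => /eqP h; have := congr1 reC h; rewrite /=; lra.
  by rewrite sqrrN expr1n !eqxx.
- rewrite omega3; case: i hi => [|[|[|i]]] //= _.
  + by rewrite expr1 (negbTE w3_neq1).
  + by rewrite (negbTE w3sq_neq1).
  + by rewrite w3_cube !eqxx.
- rewrite omega4; case: i hi => [|[|[|[|i]]]] //= _.
  + rewrite expr1 [X in _ == X]/= eqbF_neg; apply/negP => /eqP h; have := congr1 reC h; rewrite /=; lra.
  + rewrite sqr_i [X in _ == X]/= eqbF_neg; apply/negP => /eqP h; have := congr1 reC h; rewrite /=; lra.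
  + rewrite exprS sqr_i mulrN1 [X in _ == X]/= eqbF_neg; apply/negP => /eqP h; have := congr1 imC h; rewrite /=; lra.
  + by rewrite (exprM _ 2 2) sqr_i sqrrN expr1n !eqxx.
Qed.

Lemma omega_conj (m : nat) : (2 <= m <= 4)%nat -> (omega m)^* * omega m = 1.
Proof.
case: m => [|[|[|[|[|m]]]]] // _.
- rewrite omega2; apply/eqP; rewrite eq_complex /=; apply/andP; split; apply/eqP; lra.
- have hs : Num.sqrt 3 * Num.sqrt 3 = 3 :> Rdefinitions.R.
    by rewrite -expr2 sqr_sqrtr // ler0n.
  rewrite omega3; apply/eqP; rewrite eq_complex /=; apply/andP; split; apply/eqP; nra.
- rewrite omega4; apply/eqP; rewrite eq_complex /=; apply/andP; split; apply/eqP; lra.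
Qed.

End Om.
Import Om.

Section Roots.
Local Open Scope ring_scope.
Variables (m : nat) (w : Cx).
Hypothesis pw : primitive_root_of_unity m w.

Lemma geom0 (zeta : Cx) : zeta ^+ m = 1 -> zeta != 1 -> \sum_(i < m) zeta ^+ i = 0.
Proof.
move=> h1 h2; have := subrX1 zeta m; rewrite h1 subrr => /esym/eqP.
by rewrite mulf_eq0 subr_eq0 (negbTE h2) => /eqP.
Qed.

Lemma w_neq0 : w != 0.
Proof.
apply/negP => /eqP w0; have := prim_expr_order pw; rewrite w0 expr0n.
by case: m pw => [|k] //= _ /eqP; rewrite eq_sym oner_eq0.
Qed.

Lemma sum_inv_pow (k : nat) : (k < m)%N ->
  \sum_(a < m) ((w^-1) ^+ a) ^+ k = if k == 0%N then m%:R else 0.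
Proof.
move=> km; case: eqP => [->|k0].
  by rewrite (eq_bigr (fun _ => 1)) ?sumr_const ?card_ord // => a _; rewrite expr0.
under eq_bigr => a _ do rewrite -exprM mulnC exprM.
apply: geom0.
  by rewrite -exprM mulnC exprM exprVn (prim_expr_order pw) invr1 expr1n.
rewrite exprVn invr_eq1 -(prim_order_dvd pw) gtnNdvd //.
by rewrite lt0n; apply/eqP.
Qed.
End Roots.

Section F1.
Local Open Scope ring_scope.
Variables (n m : nat).
Hypothesis pw : primitive_root_of_unity m (omega m).

Lemma m_gt0 : (0 < m)%N.
Proof. exact: (prim_order_gt0 pw). Qed.

Lemma F1 (v : 'I_n) : ceq m (flatten [seq proj_e v a | a <- index_enum 'I_m]) (gone n).
Proof.
move=> u; rewrite coef_flatten.
have E (a : 'I_m) : coef m (proj_e v a) u = \sum_(k < m)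
    (if reduce m (nseq k (v, 1%N)) == u then m%:R^-1 * (((omega m)^-1 ^+ a) ^+ k) else 0).
  rewrite coefE /proj_e big_map.
  have -> : iota 0 m = index_iota 0 m by rewrite /index_iota subn0.
  by rewrite big_mkord.
under eq_bigr => a _ do rewrite E.
rewrite exchange_big /=.
have m0 := m_gt0.
have E2 (k : 'I_m) : \sum_(a < m) (if reduce m (nseq k (v, 1%N)) == u
        then m%:R^-1 * (omega m)^-1 ^+ a ^+ k else 0) =
   if reduce m (nseq k (v, 1%N)) == u then m%:R^-1 * (if k == 0%N :> nat then m%:R else 0) else 0.
  case: ifP => _; last by rewrite big1.
  by rewrite -mulr_sumr (sum_inv_pow pw (ltn_ord k)).
under eq_bigr => k _ do rewrite E2.
rewrite coefE big_cons big_nil addr0 /=.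
case: m pw m0 E E2 => [|m'] //= pw' _ _ _.
rewrite big_ord_recl /= big1 ?addr0.
  by case: ifP => // _; rewrite mulVf // pnatr_eq0.
by move=> i _; case: ifP => // _; rewrite mulr0.
Qed.
End F1.

Section NZ.
Local Open Scope ring_scope.
Variables (n m : nat).
Hypothesis hm : (0 < m)%N.
Variable z : 'I_n -> Cx.
Hypothesis hz : forall v, z v ^+ m = 1.
Hypothesis hzc : forall v, (z v)^* * z v = 1.

Definition chi (w : seq (letter n)) : Cx := \prod_(x <- w) z x.1 ^+ x.2.

Lemma hmod (j : 'I_n) l : z j ^+ (l %% m) = z j ^+ l.
Proof. exact: expr_mod (hz j). Qed.

Lemma chi_push x s : chi (push m x s) = z x.1 ^+ x.2 * chi s.
Proof.
case: x => i k; rewrite /push /=.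
case: ifP => hk.
  by rewrite -hmod (eqP hk) expr0 mul1r.
case: s => [|[j l] s] /=.
  by rewrite /chi big_seq1 big_nil mulr1 hmod.
case: eqP => [<-|nij].
  rewrite /chi big_cons /= mulrA -exprD -hmod.
  case: ifP => [/eqP->|_]; first by rewrite expr0 mul1r.
  by rewrite big_cons.
by rewrite /chi !big_cons /= hmod.
Qed.

Lemma chi_reduce w : chi (reduce m w) = chi w.
Proof. elim: w => //= x w IH; by rewrite chi_push IH /chi big_cons. Qed.

Lemma chi_cat a b : chi (a ++ b) = chi a * chi b.
Proof. by rewrite /chi big_cat. Qed.

Definition phi (p : gelt n) : Cx := \sum_(t <- p) t.1 * chi t.2.

Lemma phi_ceq p q : ceq m p q -> phi p = phi q.
Proof.
move=> e.
have E r : phi r = \sum_(t <- r) t.1 * chi (reduce m t.2).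
  by apply: eq_bigr => t _; rewrite chi_reduce.
by rewrite !E; apply: sum_red.
Qed.

Lemma phi_cat p q : phi (p ++ q) = phi p + phi q.
Proof. by rewrite /phi big_cat. Qed.

Lemma phi_flatten (I : Type) (s : seq I) (f : I -> gelt n) :
  phi (flatten (map f s)) = \sum_(i <- s) phi (f i).
Proof.
elim: s => [|i s IH] /=; first by rewrite big_nil /phi big_nil.
by rewrite big_cons phi_cat IH.
Qed.

Lemma phi_gmul p q : phi (gmul p q) = phi p * phi q.
Proof.
rewrite /phi /gmul big_allpairs_dep mulr_suml; apply: eq_bigr => t _.
rewrite mulr_sumr; apply: eq_bigr => s _ /=; rewrite chi_cat.
by rewrite mulrACA.
Qed.

Lemma phi_gone : phi (gone n) = 1.
Proof. by rewrite /phi big_seq1 /chi big_nil mulr1. Qed.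

Lemma z_neq0 j : z j != 0.
Proof.
apply/negP => /eqP h; have := hz j; rewrite h expr0n.
by case: m hm => // k _ /eqP; rewrite eq_sym oner_eq0.
Qed.

Lemma chi_winv t : chi (winv m t) = (chi t)^*.
Proof.
rewrite /winv /chi big_rev big_map rmorph_prod; apply: eq_bigr => -[j k] _ /=.
rewrite rmorphXn.
apply: (mulIf (expf_neq0 k (z_neq0 j))).
rewrite -exprMn hzc expr1n -(hmod j k) -exprD subnK ?hz //.
exact: ltnW (ltn_pmod _ hm).
Qed.

Lemma phi_gstar p : phi (gstar m p) = (phi p)^*.
Proof.
rewrite /phi /gstar big_map rmorph_sum; apply: eq_bigr => t _ /=.
by rewrite chi_winv rmorphM.
Qed.

Lemma phi_ideal (eG : rel 'I_n) (eH : rel 'I_m) p :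
  (forall v w a b, lambda_zero eG eH v w a b -> phi (gmul (proj_e v a) (proj_e w b)) = 0) ->
  in_ideal eG eH p -> phi p = 0.
Proof.
move=> H /in_idealP [l [o e]]; rewrite (phi_ceq e) phi_flatten big_seq big1 // => t tl.
move/allP: o => /(_ t tl).
case: t {tl} => [[x [[[[v w] a] b] st]] y] /= lz.
by rewrite !phi_gmul; case: st; rewrite /= ?phi_gstar H // ?rmorph0 mulr0 mul0r.
Qed.

Lemma chi_nseq v k : chi (nseq k (v, 1%N)) = z v ^+ k.
Proof. elim: k => [|k IH]; first by rewrite /chi big_nil. by rewrite /chi big_cons -/(chi _) IH expr1 exprS. Qed.

Lemma phi_proj (v : 'I_n) (a : 'I_m) :
  phi (proj_e v a) = m%:R^-1 * \sum_(k < m) (((omega m)^-1 ^+ a) * z v) ^+ k.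
Proof.
rewrite /phi /proj_e big_map.
have -> : iota 0 m = index_iota 0 m by rewrite /index_iota subn0.
rewrite big_mkord mulr_sumr; apply: eq_bigr => k _ /=.
by rewrite chi_nseq exprMn mulrA.
Qed.
End NZ.

Section NonZero.
Local Open Scope ring_scope.

Lemma nonzero_K (j : nat) : (2 <= j <= 4)%N -> alg_nonzero (@Kgraph j) (@Kgraph j).
Proof.
move=> hj.
have pw : primitive_root_of_unity j (omega j).
  by apply: prim_omega; case/andP: hj => h1 h2; rewrite h2 andbT; apply: leq_trans h1.
have hc := omega_conj hj.
have hm : (0 < j)%N by apply: prim_order_gt0 pw.
pose z := fun v : 'I_j => omega j ^+ v.
have hz : forall v, z v ^+ j = 1.
  by move=> v; rewrite /z -exprM mulnC exprM (prim_expr_order pw) expr1n.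
have hzc : forall v, (z v)^* * z v = 1.
  by move=> v; rewrite /z rmorphXn -exprMn hc expr1n.
have hw0 : omega j != 0 by apply: w_neq0 pw.
have key : forall v a : 'I_j, a != v -> phi z (proj_e v a) = 0.
  move=> v a nav; rewrite phi_proj (geom0 (m := j)) ?mulr0 //.
    by rewrite exprMn -exprM mulnC exprM exprVn (prim_expr_order pw) invr1 expr1n
      mul1r hz.
  apply/negP => /eqP h.
  have : omega j ^+ v == omega j ^+ a.
    have e : omega j ^+ v = omega j ^+ a * ((omega j)^-1 ^+ a * z v).
      by rewrite mulrA -exprMn mulrV ?unitfE // expr1n mul1r.
    by rewrite e h mulr1.
  rewrite (eq_prim_root_expr pw) !modn_small // => /eqP/val_inj eva.
  by move: nav; rewrite eva eqxx.
exists (gone j) => hI.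
have := phi_ideal hm hz hzc _ hI.
rewrite phi_gone => /(_ _) h; have : (1 : Cx) = 0.
  apply: h => v w a b; rewrite /lambda_zero /Kgraph phi_gmul.
  case/orP => [/andP [/eqP vw ab] | /andP [vw /negPn /eqP ab]].
    subst w; case: (eqVneq a v) => [av|av]; last by rewrite key ?mul0r.
    by subst a; rewrite (key v b) ?mulr0 // eq_sym.
  subst b; case: (eqVneq a v) => [av|av]; last by rewrite key ?mul0r.
  by subst a; rewrite (key w v) ?mulr0.
by move/eqP; rewrite oner_eq0.
Qed.
End NonZero.

Section SRing.
Variables (n m : nat).
Hypothesis hm : (0 < m)%N.
Variables (eG : rel 'I_n) (eH : rel 'I_m).
Local Open Scope ring_scope.
Notation T := (gelt n).
Implicit Types p q z : T.
Notation ceq := (@ceq n m).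

Definition gsub p q : T := p ++ gneg q.
Definition req p q : Prop := in_ideal eG eH (p ++ gneg q).

Ltac coefs := move=> u; rewrite ?(coef_cat, coef_neg, coef_nil, coef_sc).

Lemma gmul_negl a b : ceq (gmul (gneg a) b) (gneg (gmul a b)).
Proof.
move=> u; rewrite coef_neg !coef_gmul big_map -sumrN; apply: eq_bigr => t _.
rewrite -sumrN; apply: eq_bigr => s _ /=; by case: ifP; rewrite ?oppr0 ?mulNr.
Qed.

Lemma gmul_negr a b : ceq (gmul a (gneg b)) (gneg (gmul a b)).
Proof.
move=> u; rewrite coef_neg !coef_gmul -sumrN; apply: eq_bigr => t _.
rewrite big_map -sumrN; apply: eq_bigr => s _ /=; by case: ifP; rewrite ?oppr0 ?mulrN.
Qed.

Lemma ceq_req p q : ceq p q -> req p q.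
Proof.
move=> e; apply: (I_ceq (q := [::])) (I_nil eG eH).
by coefs; rewrite e subrr.
Qed.

Lemma req_refl p : req p p. Proof. exact: ceq_req. Qed.
Lemma req_sym p q : req p q -> req q p.
Proof.
move=> h; apply: (I_ceq _ (I_neg hm h)); coefs; ring.
Qed.
Lemma req_trans p q r : req p q -> req q r -> req p r.
Proof.
move=> h1 h2; apply: (I_ceq _ (I_cat h1 h2)); coefs; ring.
Qed.

Lemma req_add p p' q q' : req p p' -> req q q' -> req (p ++ q) (p' ++ q').
Proof.
move=> h1 h2; apply: (I_ceq _ (I_cat h1 h2)); coefs; ring.
Qed.

Lemma req_opp p p' : req p p' -> req (gneg p) (gneg p').
Proof.
move=> h1; apply: (I_ceq _ (I_neg hm h1)); coefs; ring.
Qed.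

Lemma req_sub p p' q q' : req p p' -> req q q' -> req (gsub p q) (gsub p' q').
Proof.
move=> h1 h2; apply: (I_ceq _ (I_cat h1 (I_neg hm h2))); rewrite /gsub; coefs; ring.
Qed.

Lemma req_mul p p' q q' : req p p' -> req q q' -> req (gmul p q) (gmul p' q').
Proof.
move=> h1 h2; apply: (I_ceq _ (I_cat (I_rmul hm q h1) (I_lmul hm p' h2))).
move=> u; rewrite !coef_cat coef_neg gmul_catl gmul_catr !coef_cat.
rewrite gmul_negl gmul_negr !coef_neg; ring.
Qed.

#[local] Instance gops : @Ncring.Ring_ops T [::] (gone n) (@cat (Cx * seq (letter n))) (@gmul n) gsub (@gneg n) req := {}.

#[local] Instance gring : @Ncring.Ring T [::] (gone n) (@cat (Cx * seq (letter n))) (@gmul n) gsub (@gneg n) req gops.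
Proof.
constructor.
- constructor; [exact: req_refl | exact: req_sym | exact: req_trans].
- by move=> x x' h y y' h'; apply: req_add.
- by move=> x x' h y y' h'; apply: req_mul.
- by move=> x x' h y y' h'; apply: req_sub.
- by move=> x x' h; apply: req_opp.
- move=> x; exact: req_refl.
- move=> x y; apply: ceq_req; coefs; ring.
- move=> x y z; apply: ceq_req => u. change (coef m (x ++ (y ++ z)) u = coef m ((x ++ y) ++ z) u). by rewrite catA.
- move=> x; apply: ceq_req; exact: gmul1l.
- move=> x; apply: ceq_req; exact: gmul1r.
- move=> x y z; apply: ceq_req; exact: gmulA.
- move=> x y z; apply: ceq_req; exact: gmul_catl.
- move=> x y z; apply: ceq_req; exact: gmul_catr.
- move=> x y; exact: req_refl.
- move=> x; apply: ceq_req; coefs; ring.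
Qed.


Local Notation "a +' b" := (@cat (Cx * seq (letter n)) a b) (at level 50, left associativity).
Local Notation "a *' b" := (@gmul n a b) (at level 40, left associativity).
Local Notation "a -' b" := (gsub a b) (at level 50, left associativity).
Local Notation "k ** a" := (@Algebra_syntax.multiplication BinNums.Z T _ (BinInt.Z.of_nat k%N) a) (at level 40).
Local Notation "0'" := ([::] : T).
Local Notation "1'" := (gone n).
Local Notation "a =~ b" := (req a b) (at level 70).

#[local] Instance req_Equiv : Equivalence req.
Proof. constructor; [exact: req_refl | exact: req_sym | exact: req_trans]. Qed.
#[local] Instance cat_Proper : Proper (req ==> req ==> req) (@cat (Cx * seq (letter n))).
Proof. by move=> x x' h y y' h'; apply: req_add. Qed.
#[local] Instance gmul_Proper : Proper (req ==> req ==> req) (@gmul n).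
Proof. by move=> x x' h y y' h'; apply: req_mul. Qed.
#[local] Instance gsub_Proper : Proper (req ==> req ==> req) gsub.
Proof. by move=> x x' h y y' h'; apply: req_sub. Qed.
#[local] Instance gneg_Proper : Proper (req ==> req) (@gneg n).
Proof. by move=> x x' h; apply: req_opp. Qed.
#[local] Instance zmul_Proper : Proper (eq ==> req ==> req) (@Algebra_syntax.multiplication BinNums.Z T _).
Proof. move=> k k' <- x x' h; apply: req_mul => //; exact: req_refl. Qed.

Ltac cert C := apply: (@req_trans _ C); first Ncring_tac.non_commutative_ring.

Lemma K4_3 (P Q R : T) : P *' P =~ P -> Q *' Q =~ Q -> R *' R =~ R ->
  P +' (Q +' (R +' 0')) =~ 1' +' (1' +' (1' +' (1' +' 0'))) -> 240 ** 1' =~ 0'.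
Proof.
move=> hP hQ hR hS.
have hR' : R =~ 1' +' (1' +' (1' +' (1' +' 0'))) -' P -' Q.
  setoid_rewrite <- hS; Ncring_tac.non_commutative_ring.
setoid_rewrite hR' in hR.
have Z1 : P *' P -' P =~ 0'.
  setoid_rewrite hP; Ncring_tac.non_commutative_ring.
have Z2 : Q *' Q -' Q =~ 0'.
  setoid_rewrite hQ; Ncring_tac.non_commutative_ring.
have ZR : (1' +' (1' +' (1' +' (1' +' 0'))) -' P -' Q) *' (1' +' (1' +' (1' +' (1' +' 0'))) -' P -' Q) -' (1' +' (1' +' (1' +' (1' +' 0'))) -' P -' Q) =~ 0'.
  setoid_rewrite hR; Ncring_tac.non_commutative_ring.
have hY : (P *' Q +' Q *' P -' 6 ** P -' 6 ** Q +' 12 ** 1') =~ 0'.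
  cert (((1' +' (1' +' (1' +' (1' +' 0'))) -' P -' Q) *' (1' +' (1' +' (1' +' (1' +' 0'))) -' P -' Q) -' (1' +' (1' +' (1' +' (1' +' 0'))) -' P -' Q)) -' (P *' P -' P) -' (Q *' Q -' Q)).
  setoid_rewrite ZR; setoid_rewrite Z1; setoid_rewrite Z2; Ncring_tac.non_commutative_ring.
have hA : (P *' Q *' P -' 5 ** (P *' Q) +' 6 ** P) =~ 0'.
  cert (P *' (P *' Q +' Q *' P -' 6 ** P -' 6 ** Q +' 12 ** 1') -' (P *' P -' P) *' Q +' 6 ** (P *' P -' P)).
  setoid_rewrite hY; setoid_rewrite Z1; Ncring_tac.non_commutative_ring.
have hB : (P *' Q *' P -' 5 ** (Q *' P) +' 6 ** P) =~ 0'.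
  cert ((P *' Q +' Q *' P -' 6 ** P -' 6 ** Q +' 12 ** 1') *' P -' Q *' (P *' P -' P) +' 6 ** (P *' P -' P)).
  setoid_rewrite hY; setoid_rewrite Z1; Ncring_tac.non_commutative_ring.
have hC : (4 ** (P *' Q *' P) -' 6 ** P) =~ 0'.
  cert ((P *' P -' P) *' Q *' P +' P *' Q *' (P *' P -' P) -' 6 ** (P *' (P *' P -' P)) +' 6 ** (P *' P -' P) -' P *' (P *' Q +' Q *' P -' 6 ** P -' 6 ** Q +' 12 ** 1') *' P).
  setoid_rewrite hY; setoid_rewrite Z1; Ncring_tac.non_commutative_ring.
have hD : (20 ** (P *' Q) -' 30 ** P) =~ 0'.
  cert ((4 ** (P *' Q *' P) -' 6 ** P) -' 4 ** (P *' Q *' P -' 5 ** (P *' Q) +' 6 ** P)).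
  setoid_rewrite hC; setoid_rewrite hA; Ncring_tac.non_commutative_ring.
have hE : (20 ** (Q *' P) -' 30 ** P) =~ 0'.
  cert ((4 ** (P *' Q *' P) -' 6 ** P) -' 4 ** (P *' Q *' P -' 5 ** (Q *' P) +' 6 ** P)).
  setoid_rewrite hC; setoid_rewrite hB; Ncring_tac.non_commutative_ring.
have hA2 : (Q *' P *' Q -' 5 ** (Q *' P) +' 6 ** Q) =~ 0'.
  cert (Q *' (P *' Q +' Q *' P -' 6 ** P -' 6 ** Q +' 12 ** 1') -' (Q *' Q -' Q) *' P +' 6 ** (Q *' Q -' Q)).
  setoid_rewrite hY; setoid_rewrite Z2; Ncring_tac.non_commutative_ring.
have hC2 : (4 ** (Q *' P *' Q) -' 6 ** Q) =~ 0'.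
  cert ((Q *' Q -' Q) *' P *' Q +' Q *' P *' (Q *' Q -' Q) -' 6 ** (Q *' (Q *' Q -' Q)) +' 6 ** (Q *' Q -' Q) -' Q *' (P *' Q +' Q *' P -' 6 ** P -' 6 ** Q +' 12 ** 1') *' Q).
  setoid_rewrite hY; setoid_rewrite Z2; Ncring_tac.non_commutative_ring.
have hF : (20 ** (Q *' P) -' 30 ** Q) =~ 0'.
  cert ((4 ** (Q *' P *' Q) -' 6 ** Q) -' 4 ** (Q *' P *' Q -' 5 ** (Q *' P) +' 6 ** Q)).
  setoid_rewrite hC2; setoid_rewrite hA2; Ncring_tac.non_commutative_ring.
have hG : (30 ** P -' 30 ** Q) =~ 0'.
  cert ((20 ** (Q *' P) -' 30 ** Q) -' (20 ** (Q *' P) -' 30 ** P)).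
  setoid_rewrite hF; setoid_rewrite hE; Ncring_tac.non_commutative_ring.
have hH : (180 ** P -' 240 ** 1') =~ 0'.
  cert ((20 ** (P *' Q) -' 30 ** P) +' (20 ** (Q *' P) -' 30 ** P) +' 4 ** (30 ** P -' 30 ** Q) -' 20 ** (P *' Q +' Q *' P -' 6 ** P -' 6 ** Q +' 12 ** 1')).
  setoid_rewrite hD; setoid_rewrite hE; setoid_rewrite hG; setoid_rewrite hY; Ncring_tac.non_commutative_ring.
have hK : (60 ** P) =~ 0'.
  cert (180 ** (P *' P -' P) -' P *' (180 ** P -' 240 ** 1')).
  setoid_rewrite Z1; setoid_rewrite hH; Ncring_tac.non_commutative_ring.
cert (3 ** (60 ** P) -' (180 ** P -' 240 ** 1')).
setoid_rewrite hK; setoid_rewrite hH; Ncring_tac.non_commutative_ring.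
Qed.

Lemma K3_2 (P Q : T) : P *' P =~ P -> Q *' Q =~ Q ->
  P +' (Q +' 0') =~ (1' +' (1' +' (1' +' 0'))) -> 12 ** 1' =~ 0'.
Proof.
move=> hP hQ hS.
have hQ' : Q =~ (1' +' (1' +' (1' +' 0'))) -' P.
  setoid_rewrite <- hS; Ncring_tac.non_commutative_ring.
setoid_rewrite hQ' in hQ.
have Z1 : (P *' P -' P) =~ 0'.
  setoid_rewrite hP; Ncring_tac.non_commutative_ring.
have ZQ : (((1' +' (1' +' (1' +' 0'))) -' P) *' ((1' +' (1' +' (1' +' 0'))) -' P) -' ((1' +' (1' +' (1' +' 0'))) -' P)) =~ 0'.
  setoid_rewrite hQ; Ncring_tac.non_commutative_ring.
have hW : (4 ** P -' 6 ** 1') =~ 0'.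
  cert ((P *' P -' P) -' (((1' +' (1' +' (1' +' 0'))) -' P) *' ((1' +' (1' +' (1' +' 0'))) -' P) -' ((1' +' (1' +' (1' +' 0'))) -' P))). setoid_rewrite Z1; setoid_rewrite ZQ; Ncring_tac.non_commutative_ring.
have hV : (2 ** P) =~ 0'.
  cert (4 ** (P *' P -' P) -' P *' (4 ** P -' 6 ** 1')). setoid_rewrite Z1; setoid_rewrite hW; Ncring_tac.non_commutative_ring.
cert (4 ** (2 ** P) -' 2 ** (4 ** P -' 6 ** 1')). setoid_rewrite hW; setoid_rewrite hV; Ncring_tac.non_commutative_ring.
Qed.

Lemma K4_2 (P Q : T) : P *' P =~ P -> Q *' Q =~ Q ->
  P +' (Q +' 0') =~ (1' +' (1' +' (1' +' (1' +' 0')))) -> 72 ** 1' =~ 0'.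
Proof.
move=> hP hQ hS.
have hQ' : Q =~ (1' +' (1' +' (1' +' (1' +' 0')))) -' P.
  setoid_rewrite <- hS; Ncring_tac.non_commutative_ring.
setoid_rewrite hQ' in hQ.
have Z1 : (P *' P -' P) =~ 0'.
  setoid_rewrite hP; Ncring_tac.non_commutative_ring.
have ZQ : (((1' +' (1' +' (1' +' (1' +' 0')))) -' P) *' ((1' +' (1' +' (1' +' (1' +' 0')))) -' P) -' ((1' +' (1' +' (1' +' (1' +' 0')))) -' P)) =~ 0'.
  setoid_rewrite hQ; Ncring_tac.non_commutative_ring.
have hW : (6 ** P -' 12 ** 1') =~ 0'.
  cert ((P *' P -' P) -' (((1' +' (1' +' (1' +' (1' +' 0')))) -' P) *' ((1' +' (1' +' (1' +' (1' +' 0')))) -' P) -' ((1' +' (1' +' (1' +' (1' +' 0')))) -' P))). setoid_rewrite Z1; setoid_rewrite ZQ; Ncring_tac.non_commutative_ring.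
have hV : (6 ** P) =~ 0'.
  cert (6 ** (P *' P -' P) -' P *' (6 ** P -' 12 ** 1')). setoid_rewrite Z1; setoid_rewrite hW; Ncring_tac.non_commutative_ring.
cert (6 ** (6 ** P) -' 6 ** (6 ** P -' 12 ** 1')). setoid_rewrite hW; setoid_rewrite hV; Ncring_tac.non_commutative_ring.
Qed.

Fixpoint ones (k : nat) : T := if k is k'.+1 then 1' +' ones k' else 0'.

Lemma ones12 : 12 ** 1' =~ ones 12.
Proof. cbv [ones]. Ncring_tac.non_commutative_ring. Qed.

Lemma ones72 : 72 ** 1' =~ ones 72.
Proof. cbv [ones]. Ncring_tac.non_commutative_ring. Qed.

Lemma ones240 : 240 ** 1' =~ ones 240.
Proof. cbv [ones]. Ncring_tac.non_commutative_ring. Qed.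
End SRing.

Section Zero.
Local Open Scope ring_scope.
Variables (n m : nat).
Hypothesis hm : (0 < m)%N.
Notation eG := (@Kgraph n).
Notation eH := (@Kgraph m).
Notation T := (gelt n).
Notation I := (in_ideal eG eH).

Lemma I_flatten (J : eqType) (s : seq J) (f : J -> T) :
  {in s, forall i, I (f i)} -> I (flatten (map f s)).
Proof.
elim: s => [|i s IH] H /=; first exact: I_nil.
apply: I_cat; first by apply: H; rewrite inE eqxx.
by apply: IH => j js; apply: H; rewrite inE js orbT.
Qed.

Lemma coef_gmul_flattenl (J : Type) (s : seq J) (f : J -> T) q u :
  coef m (gmul (flatten (map f s)) q) u = \sum_(i <- s) coef m (gmul (f i) q) u.
Proof.
elim: s => [|i s IH] /=; first by rewrite big_nil coef_gmul big_nil.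
by rewrite big_cons (gmul_catl m _ _ _ u) coef_cat IH.
Qed.

Lemma coef_gmul_flattenr (J : Type) (s : seq J) (f : J -> T) p u :
  coef m (gmul p (flatten (map f s))) u = \sum_(i <- s) coef m (gmul p (f i)) u.
Proof.
elim: s => [|i s IH] /=.
  by rewrite big_nil coef_gmul big1 // => t _; rewrite big_nil.
by rewrite big_cons (gmul_catr m _ _ _ u) coef_cat IH.
Qed.

Lemma coef_ones k u : coef m (ones n k) u = k%:R * coef m (gone n) u.
Proof.
elim: k => [|k IH]; first by rewrite coef_nil mul0r.
have -> : ones n k.+1 = gone n ++ ones n k by [].
by rewrite coef_cat IH mulrSr mulrDl mul1r addrC.
Qed.

Lemma ideal_all : I (gone n) -> ~ alg_nonzero eG eH.
Proof.
move=> h [p hp]; apply: hp.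
apply: (I_ceq (q := gmul p (gone n))) (I_lmul hm p h).
move=> u; symmetry; exact: gmul1r.
Qed.

Lemma from_ones k : (0 < k)%N -> req eG eH (ones n k) [::] -> I (gone n).
Proof.
move=> k0 h; apply: (I_ceq _ (I_sc hm (k%:R)^-1 h)) => u.
rewrite coef_sc coef_cat coef_neg coef_nil oppr0 addr0 coef_ones mulrA mulVf ?mul1r //.
by rewrite pnatr_eq0 -lt0n.
Qed.

Section WithPrim.
Hypothesis pw : primitive_root_of_unity m (omega m).

Definition PP (a : 'I_m) : T := flatten [seq proj_e v a | v <- index_enum 'I_n].

Lemma coefE_split (v : 'I_n) (a : 'I_m) u :
  coef m (proj_e v a) u = \sum_(b : 'I_m) coef m (gmul (proj_e v a) (proj_e v b)) u.
Proof.
rewrite -coef_gmul_flattenr.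
rewrite (ceq_gmull (proj_e v a) (F1 pw v) u).
by rewrite gmul1r.
Qed.

Lemma PP_idem a : req eG eH (gmul (PP a) (PP a)) (PP a).
Proof.
pose X := flatten [seq (flatten [seq gmul (proj_e v a) (proj_e w a) | w <- index_enum 'I_n & w != v]
     ++ gneg (flatten [seq gmul (proj_e v a) (proj_e v b) | b <- index_enum 'I_m & b != a]))
   | v <- index_enum 'I_n].
apply: (I_ceq (q := X)).
  move=> u; rewrite coef_cat coef_neg /PP coef_gmul_flattenl coef_flatten coef_flatten.
  rewrite -sumrB; apply: eq_bigr => v _.
  rewrite coef_gmul_flattenr coef_cat coef_neg !coef_flatten !big_filter coefE_split.
  rewrite (bigD1 v) //= (bigD1 a) //= opprD addrACA subrr add0r.
  by [].
apply: I_flatten => v _; apply: I_cat.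
  apply: I_flatten => w; rewrite mem_filter => /andP [wv _].
  by apply: I_gen; rewrite /lambda_zero /Kgraph eq_sym wv eqxx orbT.
apply: I_neg => //; apply: I_flatten => b; rewrite mem_filter => /andP [ba _].
by apply: I_gen; rewrite /lambda_zero /Kgraph eqxx eq_sym ba.
Qed.

Lemma PP_sum : ceq m (flatten [seq PP a | a <- index_enum 'I_m]) (ones n n).
Proof.
move=> u; rewrite coef_flatten coef_ones.
under eq_bigr => a _ do rewrite /PP coef_flatten.
rewrite exchange_big /=.
under eq_bigr => v _ do rewrite -coef_flatten (F1 pw v u).
by rewrite sumr_const card_ord mulr_natl.
Qed.
End WithPrim.
End Zero.

Section Cases.
Local Open Scope ring_scope.

Lemma zero_m1 n : (2 <= n)%N -> ~ alg_nonzero (@Kgraph n) (@Kgraph 1).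
Proof.
move=> hn.
have hm : (0 < 1)%N by [].
apply: (ideal_all hm).
have h0 : (0 < n)%N by apply: leq_trans hn.
pose v0 : 'I_n := Ordinal h0.
pose v1 : 'I_n := Ordinal hn.
pose a : 'I_1 := ord0.
have h := @I_gen n 1 (@Kgraph n) (@Kgraph 1) v0 v1 a a.
have e : forall v : 'I_n, ceq 1 (proj_e v a) (gone n).
  by move=> v u; rewrite !coefE !big_cons !big_nil /= expr0 invr1 mulr1.
apply: (I_ceq _ (h _)); last by rewrite /lambda_zero /Kgraph eqxx /=.
move=> u.
rewrite (ceq_gmulr hm _ (e v0) u) (ceq_gmull _ (e v1) u).
by rewrite gmul1l.
Qed.

Lemma zero_m2 (n : nat) : (n == 3)%N || (n == 4)%N -> ~ alg_nonzero (@Kgraph n) (@Kgraph 2).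
Proof.
move=> hn.
have hm : (0 < 2)%N by [].
have pw : primitive_root_of_unity 2 (omega 2) by apply: prim_omega.
apply: (ideal_all hm).
have hS : req (@Kgraph n) (@Kgraph 2) (@PP n 2 ord0 ++ (@PP n 2 (lift ord0 ord0) ++ [::])) (ones n n).
  apply: (req_trans _ (ceq_req _ _ (PP_sum pw))).
  apply: ceq_req => u; rewrite coef_flatten !coef_cat coef_nil.
  by rewrite big_ord_recl big_ord_recl big_ord0.
have i0 := PP_idem n hm pw ord0.
have i1 := PP_idem n hm pw (lift ord0 ord0).
case/orP: hn => /eqP hn; subst n.
  have := K3_2 hm i0 i1 hS.
  move=> h; apply: (from_ones hm (k := 12)) => //.
  exact: req_trans (req_sym hm (ones12 hm _ _)) h.
have := K4_2 hm i0 i1 hS.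
move=> h; apply: (from_ones hm (k := 72)) => //.
exact: req_trans (req_sym hm (ones72 hm _ _)) h.
Qed.

Lemma zero_43 : ~ alg_nonzero (@Kgraph 4) (@Kgraph 3).
Proof.
have hm : (0 < 3)%N by [].
have pw : primitive_root_of_unity 3 (omega 3) by apply: prim_omega.
apply: (ideal_all hm).
have hS : req (@Kgraph 4) (@Kgraph 3)
   (@PP 4 3 ord0 ++ (@PP 4 3 (lift ord0 ord0) ++ (@PP 4 3 (lift ord0 (lift ord0 ord0)) ++ [::]))) (ones 4 4).
  apply: (req_trans _ (ceq_req _ _ (PP_sum pw))).
  apply: ceq_req => u; rewrite coef_flatten !coef_cat coef_nil.
  by rewrite big_ord_recl big_ord_recl big_ord_recl big_ord0.
have i0 := PP_idem 4 hm pw ord0.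
have i1 := PP_idem 4 hm pw (lift ord0 ord0).
have i2 := PP_idem 4 hm pw (lift ord0 (lift ord0 ord0)).
have := K4_3 hm i0 i1 i2 hS.
move=> h; apply: (from_ones hm (k := 240)) => //.
exact: req_trans (req_sym hm (ones240 hm _ _)) h.
Qed.
End Cases.

Theorem mainTheorem4 : forall j : nat, (2 <= j <= 4)%N -> chi_alg_is (@Kgraph j) j.
Proof.
move=> j hj; split; first by case/andP: hj => h _; apply: leq_trans h.
split; first exact: nonzero_K.
move=> c /andP [c0 cj].
case: j hj cj => [|[|[|[|[|j]]]]] // _; case: c c0 => [|[|[|[|c]]]] // _ _.
- exact: zero_m1.
- exact: zero_m1.
- exact: zero_m2.
- exact: zero_m1.
- exact: zero_m2.
- exact: zero_43.
Qed.
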